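(* There exists an absolute constant $C_2>0$ such that for every $\delta_0>0$ the following holds: if $\|\mathcal T-\mathcal S\|_{\mathrm{op}}<\delta_0$, then for all $x^+\in\mathbb R^{2n}$ and all nonzero $u\in\mathbb R^{2n}$, $$\big|u^TH_f(x^+)u-u^TH_g(x^+)u\big|<C_2\delta_0c\,\|u\|^2(\|x\|+\|x^\natural\|)^2,$$ where $H_f,H_g$ denote the Hessians of $f,g$ with respect to $x^+$.
   Context: Let $n,m\ge 1$, $a_1,\dots,a_m\in\mathbb C^n$ and $x^\natural\in\mathbb C^n$ with $x^\natural\neq 0$. For $a,b\in\mathbb C^n$ write $\langle a,b\rangle=\sum_{j}a_j\overline{b_j}$ and let $\|\cdot\|$ be the Euclidean norm. Let $y_i=|\langle a_i,x^\natural\rangle|^2$. For $v\in\mathbb C^n$ put $v^+=(\mathrm{Re}\,v,\mathrm{Im}\,v)\in\mathbb R^{2n}$ and $v^-=(-\mathrm{Im}\,v,\mathrm{Re}\,v)$; $x$ and $x^+$ always correspond. Define $f:\mathbb R^{2n}\to\mathbb R$ by $f(x^+)=\sum_{i=1}^m\big(|\langle a_i,x\rangle|^2-y_i\big)^2$. Fix $\sigma>0$ (in the paper, $\sigma^2=\mathrm{Var}((a_i^+)_1)$ for random measurement vectors), set $c=m\sigma^4$, and define $g(x^+)=8c\left(\|x\|^4+\|x^\natural\|^4-|\langle x,x^\natural\rangle|^2-\|x\|^2\|x^\natural\|^2\right)$. Define the order-4 tensors on $\mathbb R^{2n}$: $\mathcal T=\frac1c\sum_{i=1}^m(a_i^+)^{\otimes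 4}$ and $\mathcal S_{i_1i_2i_3i_4}=\mathbf 1_{i_1=i_2,\,i_3=i_4}+\mathbf 1_{i_1=i_3,\,i_2=i_4}+\mathbf 1_{i_1=i_4,\,i_2=i_3}$, and $\|\mathcal R\|_{\mathrm{op}}=\sup\{\langle \mathcal R,u_1\otimes u_2\otimes u_3\otimes u_4\rangle:\ u_j\in\mathbb R^{2n},\ \|u_1\|\|u_2\|\|u_3\|\|u_4\|=1\}$ (tensor inner product = sum of entrywise products). *)

(* Defs.v *)
From HB Require Import structures.
From mathcomp Require Import all_boot all_order all_algebra.
From mathcomp Require Import all_classical all_reals all_analysis.
Set Implicit Arguments. Unset Strict Implicit. Unset Printing Implicit Defensive.
Import Order.TTheory GRing.Theory Num.Theory.
Local Open Scope ring_scope.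

Section PhaseRetrieval.
Variable R : realType.

(* A complex vector v in C^n is represented by the pair (Re v, Im v) of real row vectors. *)
Definition cvec (n : nat) := ('rV[R]_n * 'rV[R]_n)%type.

(* Real and imaginary parts of <a,b> = sum_j a_j * conj(b_j). *)
Definition cinner_re n (a b : cvec n) : R :=
  \sum_(j < n) (a.1 0 j * b.1 0 j + a.2 0 j * b.2 0 j).
Definition cinner_im n (a b : cvec n) : R :=
  \sum_(j < n) (a.2 0 j * b.1 0 j - a.1 0 j * b.2 0 j).
Definition cinner_abs2 n (a b : cvec n) : R :=
  cinner_re a b ^+ 2 + cinner_im a b ^+ 2.
Definition cnorm n (x : cvec n) : R :=
  Num.sqrt (\sum_(j < n) (x.1 0 j ^+ 2 + x.2 0 j ^+ 2)).

Definition plus n (x : cvec n) : 'rV[R]_(n + n) := row_mx x.1 x.2.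
Definition of_plus n (v : 'rV[R]_(n + n)) : cvec n := (lsubmx v, rsubmx v).

Definition enorm N (u : 'rV[R]_N) : R := Num.sqrt (\sum_(j < N) u 0 j ^+ 2).

Definition f_obj n m (a : 'I_m -> cvec n) (xnat : cvec n) (v : 'rV[R]_(n + n)) : R :=
  \sum_(i < m) (cinner_abs2 (a i) (of_plus v) - cinner_abs2 (a i) xnat) ^+ 2.

Definition g_obj n (c : R) (xnat : cvec n) (v : 'rV[R]_(n + n)) : R :=
  let x := of_plus v in
  8 * c * (cnorm x ^+ 4 + cnorm xnat ^+ 4 - cinner_abs2 x xnat
           - cnorm x ^+ 2 * cnorm xnat ^+ 2).

Definition tensor4 N := 'I_N -> 'I_N -> 'I_N -> 'I_N -> R.

Definition T_tensor n m (a : 'I_m -> cvec n) (c : R) : tensor4 (n + n) :=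
  fun i1 i2 i3 i4 => c^-1 * \sum_(i < m)
    (plus (a i) 0 i1 * plus (a i) 0 i2 * plus (a i) 0 i3 * plus (a i) 0 i4).

Definition S_tensor N : tensor4 N :=
  fun i1 i2 i3 i4 =>
    ((i1 == i2) && (i3 == i4))%:R + ((i1 == i3) && (i2 == i4))%:R
    + ((i1 == i4) && (i2 == i3))%:R.

Definition tensor_sub N (A B : tensor4 N) : tensor4 N :=
  fun i1 i2 i3 i4 => A i1 i2 i3 i4 - B i1 i2 i3 i4.

Definition tensor_apply N (A : tensor4 N) (u1 u2 u3 u4 : 'rV[R]_N) : R :=
  \sum_(i1 < N) \sum_(i2 < N) \sum_(i3 < N) \sum_(i4 < N)
    A i1 i2 i3 i4 * u1 0 i1 * u2 0 i2 * u3 0 i3 * u4 0 i4.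

Definition tensor_opnorm N (A : tensor4 N) : R :=
  sup [set r : R | exists u1 u2 u3 u4 : 'rV[R]_N,
         enorm u1 * enorm u2 * enorm u3 * enorm u4 = 1 /\
         r = tensor_apply A u1 u2 u3 u4].

Definition hessian N (F : 'rV[R]_N -> R) (x : 'rV[R]_N) (j k : 'I_N) : R :=
  'D_(delta_mx 0 j) ('D_(delta_mx 0 k) F) x.

Definition hess_quad N (F : 'rV[R]_N -> R) (x u : 'rV[R]_N) : R :=
  \sum_(j < N) \sum_(k < N) u 0 j * hessian F x j k * u 0 k.

End PhaseRetrieval.

(* Main.v *)
Require Import Defs.
From HB Require Import structures.
From mathcomp Require Import all_boot all_order all_algebra.
From mathcomp Require Import all_classical all_reals all_analysis.
From mathcomp Require Import ring lra.
Import Order.TTheory GRing.Theory Num.Theory.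
Local Open Scope ring_scope.

Module PR.
Import numFieldNormedType.Exports.
Local Open Scope classical_set_scope.
Local Open Scope ring_scope.
Set Implicit Arguments. Unset Strict Implicit.



Section S.
Variable R : realType.
Variable N : nat.
Implicit Types (A : tensor4 R N).

Ltac ta_lin := rewrite /tensor_apply; rewrite mulr_sumr -big_split; apply: eq_bigr => ? _;
  rewrite mulr_sumr -big_split; apply: eq_bigr => ? _;
  rewrite mulr_sumr -big_split; apply: eq_bigr => ? _;
  rewrite mulr_sumr -big_split; apply: eq_bigr => ? _; rewrite !mxE /=; ring.

Lemma ta_lin1 A (a : R) w w' w2 w3 w4 :
  tensor_apply A (a *: w + w') w2 w3 w4 = a * tensor_apply A w w2 w3 w4 + tensor_apply A w' w2 w3 w4.
Proof. ta_lin. Qed.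
Lemma ta_lin2 A (a : R) w w' w1 w3 w4 :
  tensor_apply A w1 (a *: w + w') w3 w4 = a * tensor_apply A w1 w w3 w4 + tensor_apply A w1 w' w3 w4.
Proof. ta_lin. Qed.
Lemma ta_lin3 A (a : R) w w' w1 w2 w4 :
  tensor_apply A w1 w2 (a *: w + w') w4 = a * tensor_apply A w1 w2 w w4 + tensor_apply A w1 w2 w' w4.
Proof. ta_lin. Qed.
Lemma ta_lin4 A (a : R) w w' w1 w2 w3 :
  tensor_apply A w1 w2 w3 (a *: w + w') = a * tensor_apply A w1 w2 w3 w + tensor_apply A w1 w2 w3 w'.
Proof. ta_lin. Qed.

Definition tscale (k : R) A : tensor4 R N := fun i1 i2 i3 i4 => k * A i1 i2 i3 i4.

Lemma ta_scale k A w1 w2 w3 w4 :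
  tensor_apply (tscale k A) w1 w2 w3 w4 = k * tensor_apply A w1 w2 w3 w4.
Proof.
rewrite /tensor_apply mulr_sumr; apply: eq_bigr => ? _;
  rewrite mulr_sumr; apply: eq_bigr => ? _;
  rewrite mulr_sumr; apply: eq_bigr => ? _;
  rewrite mulr_sumr; apply: eq_bigr => ? _; rewrite /tscale; ring.
Qed.

Lemma ta_sub A B w1 w2 w3 w4 :
  tensor_apply (tensor_sub A B) w1 w2 w3 w4 = tensor_apply A w1 w2 w3 w4 - tensor_apply B w1 w2 w3 w4.
Proof.
rewrite /tensor_apply -sumrB; apply: eq_bigr => ? _;
  rewrite -sumrB; apply: eq_bigr => ? _;
  rewrite -sumrB; apply: eq_bigr => ? _;
  rewrite -sumrB; apply: eq_bigr => ? _; rewrite /tensor_sub; ring.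
Qed.

Lemma lin_zero (phi : 'rV[R]_N -> R) :
  (forall a w w', phi (a *: w + w') = a * phi w + phi w') -> phi 0 = 0.
Proof.
move=> H; have := H 1 0 0; rewrite scale1r addr0 mul1r => E.
have : phi 0 + phi 0 - phi 0 = phi 0 - phi 0 by rewrite -E.
by rewrite addrK subrr.
Qed.

Lemma lin_sum (phi : 'rV[R]_N -> R) (c : 'I_N -> R) (v : 'I_N -> 'rV[R]_N) :
  (forall a w w', phi (a *: w + w') = a * phi w + phi w') ->
  phi (\sum_(j < N) c j *: v j) = \sum_(j < N) c j * phi (v j).
Proof.
move=> H; elim/big_rec2: _ => [|j y1 y2 _ <-]; first exact: lin_zero.
by rewrite H.
Qed.

Lemma bilin_quad (B : 'rV[R]_N -> 'rV[R]_N -> R) (u : 'rV[R]_N) :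
  (forall w, forall a p q, B (a *: p + q) w = a * B p w + B q w) ->
  (forall w, forall a p q, B w (a *: p + q) = a * B w p + B w q) ->
  \sum_(j < N) \sum_(k < N) u 0 j * B (delta_mx 0 j) (delta_mx 0 k) * u 0 k = B u u.
Proof.
move=> H1 H2.
have -> : B u u = \sum_(j < N) u 0 j * B (delta_mx 0 j) u.
  by rewrite {1}(row_sum_delta u) (lin_sum _ _ (H1 u)).
apply: eq_bigr => j _.
have -> : B (delta_mx 0 j) u = \sum_(k < N) u 0 k * B (delta_mx 0 j) (delta_mx 0 k).
  by rewrite {1}(row_sum_delta u) (lin_sum _ _ (H2 _)).
rewrite mulr_sumr; apply: eq_bigr => k _; ring.
Qed.

Lemma is_derive_poly (V : normedModType R) (f : V -> R) x v (d1 d2 d3 d4 : R) :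
  (forall h : R, f (h *: v + x) = f x + h * d1 + h ^+ 2 * d2 + h ^+ 3 * d3 + h ^+ 4 * d4) ->
  is_derive x v f d1.
Proof.
move=> Hf.
set p := fun h : R => d1 + h * d2 + h ^+ 2 * d3 + h ^+ 3 * d4.
have key : (fun h : R => h^-1 *: ((f \o shift x) (h *: v) - f x)) @ 0^' --> d1.
  have E : {near 0^', p =1 (fun h : R => h^-1 *: ((f \o shift x) (h *: v) - f x))}.
    near=> h. rewrite /= Hf /p.
    have hn : h != 0 by near: h; exact: nbhs_dnbhs_neq.
    rewrite -[h ^+ 2]/(h * h) -[h ^+ 3]/(h * (h * h)) -[h ^+ 4]/(h * (h * (h * h))).
    rewrite /GRing.scale /=.
    by field.
  apply: cvg_trans (near_eq_cvg E) _.
  have -> : d1 = p 0 by rewrite /p !expr0n /= !mul0r !addr0.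
  apply: cvg_within_filter.
  rewrite /p; apply: cvgD; [apply: cvgD; [apply: cvgD|]|];
    try apply: cvgM; try apply: cvg_cst; try apply: cvg_id; try apply: exprn_continuous.
have D : derivable f x v by apply/cvg_ex; exists d1; exact: key.
apply: (DeriveDef D).
exact: cvg_lim key.
Unshelve. all: by end_near.
Qed.


Lemma ta01 A w2 w3 w4 : tensor_apply A 0 w2 w3 w4 = 0.
Proof. exact: (@lin_zero (fun w => tensor_apply A w w2 w3 w4) (fun a w w' => ta_lin1 A a w w' w2 w3 w4)). Qed.
Lemma ta02 A w1 w3 w4 : tensor_apply A w1 0 w3 w4 = 0.
Proof. exact: (@lin_zero (fun w => tensor_apply A w1 w w3 w4) (fun a w w' => ta_lin2 A a w w' w1 w3 w4)). Qed.
Lemma ta03 A w1 w2 w4 : tensor_apply A w1 w2 0 w4 = 0.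
Proof. exact: (@lin_zero (fun w => tensor_apply A w1 w2 w w4) (fun a w w' => ta_lin3 A a w w' w1 w2 w4)). Qed.
Lemma ta04 A w1 w2 w3 : tensor_apply A w1 w2 w3 0 = 0.
Proof. exact: (@lin_zero (fun w => tensor_apply A w1 w2 w3 w) (fun a w w' => ta_lin4 A a w w' w1 w2 w3)). Qed.

Definition slot (M : 'M[R]_N) (b y : 'rV[R]_N) := y *m M + b.
Definition Pf A M1 b1 M2 b2 M3 b3 M4 b4 (y : 'rV[R]_N) : R :=
  tensor_apply A (slot M1 b1 y) (slot M2 b2 y) (slot M3 b3 y) (slot M4 b4 y).

Lemma slot_shift M b (h : R) w y : slot M b (h *: w + y) = h *: (w *m M) + slot M b y.
Proof. by rewrite /slot mulmxDl scalemxAl addrA. Qed.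

Section PfD.
Variables (A : tensor4 R N) (M1 M2 M3 M4 : 'M[R]_N) (b1 b2 b3 b4 : 'rV[R]_N).
Local Notation TA := (tensor_apply A).
Local Notation s1 y := (slot M1 b1 y).
Local Notation s2 y := (slot M2 b2 y).
Local Notation s3 y := (slot M3 b3 y).
Local Notation s4 y := (slot M4 b4 y).

Definition D1 (y w : 'rV[R]_N) :=
  TA (w *m M1) (s2 y) (s3 y) (s4 y) + TA (s1 y) (w *m M2) (s3 y) (s4 y)
  + TA (s1 y) (s2 y) (w *m M3) (s4 y) + TA (s1 y) (s2 y) (s3 y) (w *m M4).

Lemma Pf_is_derive y w : is_derive y w (Pf A M1 b1 M2 b2 M3 b3 M4 b4) (D1 y w).
Proof.
pose e1 := w *m M1; pose e2 := w *m M2; pose e3 := w *m M3; pose e4 := w *m M4.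
apply: (@is_derive_poly _ _ _ _ _
  (TA e1 e2 (s3 y) (s4 y) + TA e1 (s2 y) e3 (s4 y) + TA e1 (s2 y) (s3 y) e4
   + TA (s1 y) e2 e3 (s4 y) + TA (s1 y) e2 (s3 y) e4 + TA (s1 y) (s2 y) e3 e4)
  (TA e1 e2 e3 (s4 y) + TA e1 e2 (s3 y) e4 + TA e1 (s2 y) e3 e4 + TA (s1 y) e2 e3 e4)
  (TA e1 e2 e3 e4)) => h.
rewrite /Pf !slot_shift /D1 -/e1 -/e2 -/e3 -/e4.
rewrite !ta_lin1 !ta_lin2 !ta_lin3 !ta_lin4; ring.
Qed.

Lemma Pf_derive y w : 'D_w (Pf A M1 b1 M2 b2 M3 b3 M4 b4) y = D1 y w.
Proof. exact: (@derive_val _ _ _ _ _ _ _ (Pf_is_derive y w)). Qed.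

Lemma Pf_derivable y w : derivable (Pf A M1 b1 M2 b2 M3 b3 M4 b4) y w.
Proof. exact: (@ex_derive _ _ _ _ _ _ _ (Pf_is_derive y w)). Qed.


Lemma D1_Pf y w : D1 y w =
  Pf A 0 (w *m M1) M2 b2 M3 b3 M4 b4 y + Pf A M1 b1 0 (w *m M2) M3 b3 M4 b4 y
  + Pf A M1 b1 M2 b2 0 (w *m M3) M4 b4 y + Pf A M1 b1 M2 b2 M3 b3 0 (w *m M4) y.
Proof. by rewrite /D1 /Pf /slot !mulmx0 !add0r. Qed.

End PfD.

End S.



Section S2.
Variable R : realType.
Variable N : nat.
Section PfH.
Variables (A : tensor4 R N) (M1 M2 M3 M4 : 'M[R]_N) (b1 b2 b3 b4 : 'rV[R]_N).
Local Notation TA := (tensor_apply A).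
Local Notation s1 y := (slot M1 b1 y).
Local Notation s2 y := (slot M2 b2 y).
Local Notation s3 y := (slot M3 b3 y).
Local Notation s4 y := (slot M4 b4 y).

Definition Bq y (p q : 'rV[R]_N) :=
   TA (q *m M1) (p *m M2) (s3 y) (s4 y) + TA (q *m M1) (s2 y) (p *m M3) (s4 y)
 + TA (q *m M1) (s2 y) (s3 y) (p *m M4)
 + TA (p *m M1) (q *m M2) (s3 y) (s4 y) + TA (s1 y) (q *m M2) (p *m M3) (s4 y)
 + TA (s1 y) (q *m M2) (s3 y) (p *m M4)
 + TA (p *m M1) (s2 y) (q *m M3) (s4 y) + TA (s1 y) (p *m M2) (q *m M3) (s4 y)
 + TA (s1 y) (s2 y) (q *m M3) (p *m M4)
 + TA (p *m M1) (s2 y) (s3 y) (q *m M4) + TA (s1 y) (p *m M2) (s3 y) (q *m M4)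
 + TA (s1 y) (s2 y) (p *m M3) (q *m M4).

Lemma hessian_Pf y j k :
  hessian (Pf A M1 b1 M2 b2 M3 b3 M4 b4) y j k = Bq y (delta_mx 0 j) (delta_mx 0 k).
Proof.
rewrite /hessian.
set q := delta_mx 0 k; set p := delta_mx 0 j.
have -> : 'D_q (Pf A M1 b1 M2 b2 M3 b3 M4 b4) =
  (Pf A 0 (q *m M1) M2 b2 M3 b3 M4 b4 + Pf A M1 b1 0 (q *m M2) M3 b3 M4 b4
  + Pf A M1 b1 M2 b2 0 (q *m M3) M4 b4 + Pf A M1 b1 M2 b2 M3 b3 0 (q *m M4)).
  by apply/funext => y'; rewrite Pf_derive D1_Pf.
have dP := Pf_derivable.
rewrite deriveD; last exact: dP.
  2: by apply: derivableD; [apply: derivableD|]; exact: dP.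
rewrite deriveD; last exact: dP.
  2: by apply: derivableD; exact: dP.
rewrite deriveD; [|exact: dP|exact: dP].
rewrite !Pf_derive /D1 /Bq /slot.
rewrite !mulmx0 !add0r.
rewrite !ta01 !ta02 !ta03 !ta04.
ring.
Qed.
Lemma hess_quad_Pf y u :
  hess_quad (Pf A M1 b1 M2 b2 M3 b3 M4 b4) y u =
  2 * (TA (u *m M1) (u *m M2) (s3 y) (s4 y) + TA (u *m M1) (s2 y) (u *m M3) (s4 y)
     + TA (u *m M1) (s2 y) (s3 y) (u *m M4) + TA (s1 y) (u *m M2) (u *m M3) (s4 y)
     + TA (s1 y) (u *m M2) (s3 y) (u *m M4) + TA (s1 y) (s2 y) (u *m M3) (u *m M4)).
Proof.
rewrite /hess_quad.
under eq_bigr => j _ do under eq_bigr => k _ do rewrite hessian_Pf.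
rewrite (@bilin_quad _ _ (Bq y)).
- rewrite /Bq; ring.
- by move=> w a p1 p2; rewrite /Bq !mulmxDl -!scalemxAl !ta_lin1 !ta_lin2 !ta_lin3 !ta_lin4; ring.
- by move=> w a p1 p2; rewrite /Bq !mulmxDl -!scalemxAl !ta_lin1 !ta_lin2 !ta_lin3 !ta_lin4; ring.
Qed.

End PfH.
End S2.



Section S3.
Variable R : realType.
Variable N : nat.

Definition good (F : 'rV[R]_N -> R) :=
  (forall y w, derivable F y w) /\ (forall w y w', derivable ('D_w F) y w').

Lemma good_Pf (A : tensor4 R N) M1 b1 M2 b2 M3 b3 M4 b4 :
  good (Pf A M1 b1 M2 b2 M3 b3 M4 b4).
Proof.
split; first by move=> y w; exact: Pf_derivable.
move=> w y w'.
have -> : 'D_w (Pf A M1 b1 M2 b2 M3 b3 M4 b4) =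
  (Pf A 0 (w *m M1) M2 b2 M3 b3 M4 b4 + Pf A M1 b1 0 (w *m M2) M3 b3 M4 b4
  + Pf A M1 b1 M2 b2 0 (w *m M3) M4 b4 + Pf A M1 b1 M2 b2 M3 b3 0 (w *m M4)).
  by apply/funext => y'; rewrite Pf_derive D1_Pf.
have dP := Pf_derivable.
apply: derivableD; last exact: dP.
apply: derivableD; last exact: dP.
apply: derivableD; exact: dP.
Qed.

Lemma D_add (F G : 'rV[R]_N -> R) w : good F -> good G ->
  'D_w (F + G) = 'D_w F + 'D_w G.
Proof.
move=> [dF _] [dG _]; apply/funext => y /=.
by rewrite deriveD.
Qed.

Lemma goodD (F G : 'rV[R]_N -> R) : good F -> good G -> good (F + G).
Proof.
move=> gF gG; split.
  by move=> y w; apply: derivableD; [exact: gF.1|exact: gG.1].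
move=> w y w'; rewrite D_add //.
by apply: derivableD; [exact: gF.2|exact: gG.2].
Qed.

Lemma hess_quadD (F G : 'rV[R]_N -> R) y u : good F -> good G ->
  hess_quad (F + G) y u = hess_quad F y u + hess_quad G y u.
Proof.
move=> gF gG; rewrite /hess_quad -big_split; apply: eq_bigr => j _.
rewrite -big_split; apply: eq_bigr => k _ /=.
rewrite /hessian D_add // deriveD; last 2 first.
- exact: gF.2.
- exact: gG.2.
rewrite /=; ring.
Qed.

End S3.



Section S4.
Variable R : realType.
Variable N : nat.
Implicit Types (w : 'rV[R]_N).

Lemma enorm_ge0 w : 0 <= enorm w.
Proof. exact: sqrtr_ge0. Qed.

Lemma enorm0 : enorm (0 : 'rV[R]_N) = 0.
Proof. by rewrite /enorm big1 ?sqrtr0 // => j _; rewrite mxE expr0n. Qed.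

Lemma enorm_sq w : enorm w ^+ 2 = \sum_(j < N) w 0 j ^+ 2.
Proof. by rewrite sqr_sqrtr // sumr_ge0 // => j _; exact: sqr_ge0. Qed.

Lemma enorm_coord w j : `|w 0 j| <= enorm w.
Proof.
rewrite -sqrtr_sqr /enorm ler_sqrt; last by rewrite sumr_ge0 // => i _; exact: sqr_ge0.
rewrite (bigD1 j) //= lerDl sumr_ge0 // => i _; exact: sqr_ge0.
Qed.

Lemma enorm_scale (a : R) w : enorm (a *: w) = `|a| * enorm w.
Proof.
rewrite /enorm -sqrtr_sqr -sqrtrM ?sqr_ge0 // mulr_sumr.
by congr (Num.sqrt _); apply: eq_bigr => j _; rewrite mxE exprMn.
Qed.

Lemma enorm_eq0 w : enorm w = 0 -> w = 0.
Proof.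
move=> H; have : \sum_(j < N) w 0 j ^+ 2 = 0 by rewrite -enorm_sq H expr0n.
move/psumr_eq0P => H2; apply/rowP => j; rewrite mxE.
by apply/eqP; rewrite -sqrf_eq0; apply/eqP; apply: H2 => // i _; exact: sqr_ge0.
Qed.

Lemma ta_scale1 (A : tensor4 R N) (a : R) w1 w2 w3 w4 :
  tensor_apply A (a *: w1) w2 w3 w4 = a * tensor_apply A w1 w2 w3 w4.
Proof. by rewrite -[a *: w1]addr0 ta_lin1 ta01 addr0. Qed.
Lemma ta_scale2 (A : tensor4 R N) (a : R) w1 w2 w3 w4 :
  tensor_apply A w1 (a *: w2) w3 w4 = a * tensor_apply A w1 w2 w3 w4.
Proof. by rewrite -[a *: w2]addr0 ta_lin2 ta02 addr0. Qed.
Lemma ta_scale3 (A : tensor4 R N) (a : R) w1 w2 w3 w4 :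
  tensor_apply A w1 w2 (a *: w3) w4 = a * tensor_apply A w1 w2 w3 w4.
Proof. by rewrite -[a *: w3]addr0 ta_lin3 ta03 addr0. Qed.
Lemma ta_scale4 (A : tensor4 R N) (a : R) w1 w2 w3 w4 :
  tensor_apply A w1 w2 w3 (a *: w4) = a * tensor_apply A w1 w2 w3 w4.
Proof. by rewrite -[a *: w4]addr0 ta_lin4 ta04 addr0. Qed.

Lemma ta_crude (A : tensor4 R N) w1 w2 w3 w4 :
  `|tensor_apply A w1 w2 w3 w4| <=
  (\sum_(i1 < N) \sum_(i2 < N) \sum_(i3 < N) \sum_(i4 < N) `|A i1 i2 i3 i4|)
  * (enorm w1 * enorm w2 * enorm w3 * enorm w4).
Proof.
rewrite /tensor_apply.
apply: (le_trans (ler_norm_sum _ _ _)); rewrite mulr_suml; apply: ler_sum => i1 _.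
apply: (le_trans (ler_norm_sum _ _ _)); rewrite mulr_suml; apply: ler_sum => i2 _.
apply: (le_trans (ler_norm_sum _ _ _)); rewrite mulr_suml; apply: ler_sum => i3 _.
apply: (le_trans (ler_norm_sum _ _ _)); rewrite mulr_suml; apply: ler_sum => i4 _.
rewrite !normrM !mulrA.
have h1 := enorm_coord w1 i1; have h2 := enorm_coord w2 i2.
have h3 := enorm_coord w3 i3; have h4 := enorm_coord w4 i4.
apply: ler_pM; rewrite ?mulr_ge0 ?normr_ge0 //.
apply: ler_pM; rewrite ?mulr_ge0 ?normr_ge0 //.
apply: ler_pM; rewrite ?mulr_ge0 ?normr_ge0 //.
apply: ler_pM; rewrite ?mulr_ge0 ?normr_ge0 //.
Qed.

Lemma ta_bound (A : tensor4 R N) w1 w2 w3 w4 :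
  `|tensor_apply A w1 w2 w3 w4| <=
  tensor_opnorm A * (enorm w1 * enorm w2 * enorm w3 * enorm w4).
Proof.
set S := [set r : R | exists u1 u2 u3 u4 : 'rV[R]_N,
         enorm u1 * enorm u2 * enorm u3 * enorm u4 = 1 /\
         r = tensor_apply A u1 u2 u3 u4].
have ubS : has_ubound S.
  exists (\sum_(i1 < N) \sum_(i2 < N) \sum_(i3 < N) \sum_(i4 < N) `|A i1 i2 i3 i4|).
  move=> r [u1 [u2 [u3 [u4 [H1 ->]]]]].
  apply: (le_trans (ler_norm _)); apply: (le_trans (ta_crude _ _ _ _ _)).
  by rewrite H1 mulr1.
have supS : forall r, S r -> r <= tensor_opnorm A by move=> r Sr; exact: ub_le_sup.
have [->|n1] := eqVneq w1 0; first by rewrite ta01 normr0 enorm0 !(mul0r, mulr0).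
have [->|n2] := eqVneq w2 0; first by rewrite ta02 normr0 enorm0 !(mul0r, mulr0).
have [->|n3] := eqVneq w3 0; first by rewrite ta03 normr0 enorm0 !(mul0r, mulr0).
have [->|n4] := eqVneq w4 0; first by rewrite ta04 normr0 enorm0 !(mul0r, mulr0).
have pos : forall w, w != 0 -> 0 < enorm w.
  move=> w nw; rewrite lt_neqAle enorm_ge0 andbT eq_sym; apply/eqP => /enorm_eq0 H.
  by rewrite H eqxx in nw.
have p1 := pos _ n1; have p2 := pos _ n2; have p3 := pos _ n3; have p4 := pos _ n4.
set e1 := enorm w1; set e2 := enorm w2; set e3 := enorm w3; set e4 := enorm w4.
have nv : forall w, w != 0 -> enorm ((enorm w)^-1 *: w) = 1.
  move=> w nw; rewrite enorm_scale ger0_norm ?invr_ge0 ?enorm_ge0 // mulVf //.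
  by rewrite gt_eqF // pos.
have E : tensor_apply A w1 w2 w3 w4 = e1 * e2 * e3 * e4 *
   tensor_apply A (e1^-1 *: w1) (e2^-1 *: w2) (e3^-1 *: w3) (e4^-1 *: w4).
  rewrite ta_scale1 ta_scale2 ta_scale3 ta_scale4.
  field; rewrite !gt_eqF //.
have P0 : 0 <= e1 * e2 * e3 * e4 by rewrite !mulr_ge0 // ltW.
rewrite E normrM (ger0_norm P0) (mulrC (tensor_opnorm A)).
apply: ler_wpM2l; first exact: P0.
rewrite ler_norml; apply/andP; split.
- rewrite lerNl -mulN1r -ta_scale1 scalerA mulN1r.
  apply: supS; exists (- e1^-1 *: w1), (e2^-1 *: w2), (e3^-1 *: w3), (e4^-1 *: w4).
  split => //; rewrite scaleNr (_ : enorm (- _) = enorm (e1^-1 *: w1)).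
    by rewrite /e1 /e2 /e3 /e4 !nv // !mulr1.
  by rewrite -scaleN1r enorm_scale normrN normr1 mul1r.
- apply: supS; exists (e1^-1 *: w1), (e2^-1 *: w2), (e3^-1 *: w3), (e4^-1 *: w4).
  by split => //; rewrite /e1 /e2 /e3 /e4 !nv // !mulr1.
Qed.

End S4.



Section S5.
Variable R : realType.

Definition dotv N (p q : 'rV[R]_N) := \sum_(j < N) p 0 j * q 0 j.

Lemma dot_sym N (p q : 'rV[R]_N) : dotv p q = dotv q p.
Proof. by apply: eq_bigr => j _; rewrite mulrC. Qed.

Lemma dotDr N (p q r : 'rV[R]_N) : dotv p (q + r) = dotv p q + dotv p r.
Proof. by rewrite /dotv -big_split; apply: eq_bigr => j _; rewrite mxE mulrDr. Qed.
Lemma dotNr N (p q : 'rV[R]_N) : dotv p (- q) = - dotv p q.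
Proof. by rewrite /dotv -sumrN; apply: eq_bigr => j _; rewrite mxE mulrN. Qed.
Lemma dotDl N (p q r : 'rV[R]_N) : dotv (q + r) p = dotv q p + dotv r p.
Proof. by rewrite dot_sym dotDr !(dot_sym p). Qed.
Lemma dotNl N (p q : 'rV[R]_N) : dotv (- q) p = - dotv q p.
Proof. by rewrite dot_sym dotNr dot_sym. Qed.

Lemma enorm_dot N (p : 'rV[R]_N) : enorm p = Num.sqrt (dotv p p).
Proof. by congr (Num.sqrt _); apply: eq_bigr => j _; rewrite expr2. Qed.

Lemma enorm_sq_dot N (p : 'rV[R]_N) : enorm p ^+ 2 = dotv p p.
Proof. by rewrite enorm_sq; apply: eq_bigr => j _; rewrite expr2. Qed.

Lemma dot_ge0 N (p : 'rV[R]_N) : 0 <= dotv p p.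
Proof. by rewrite -enorm_sq_dot sqr_ge0. Qed.

Variable n : nat.

Definition Jm : 'M[R]_(n + n) := block_mx 0 1%:M (-1%:M) 0.

Lemma mulJ (q1 q2 : 'rV[R]_n) : row_mx q1 q2 *m Jm = row_mx (- q2) q1.
Proof.
rewrite /Jm mul_row_block !mulmx0 mulmx1 mulmxN mulmx1 add0r addr0.
by [].
Qed.

Lemma dot_row (p1 p2 q1 q2 : 'rV[R]_n) :
  dotv (row_mx p1 p2) (row_mx q1 q2) = \sum_(j < n) (p1 0 j * q1 0 j + p2 0 j * q2 0 j).
Proof.
rewrite /dotv big_split_ord /= big_split /=.
by congr (_ + _); apply: eq_bigr => j _; rewrite ?row_mxEl ?row_mxEr.
Qed.

Lemma dotJJ (p q : 'rV[R]_(n + n)) : dotv (p *m Jm) (q *m Jm) = dotv p q.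
Proof.
rewrite -(hsubmxK p) -(hsubmxK q) !mulJ !dot_row big_split /= addrC -big_split /=.
by apply: eq_bigr => j _; rewrite !mxE; ring.
Qed.

Lemma dotJl (p q : 'rV[R]_(n + n)) : dotv (p *m Jm) q = - dotv p (q *m Jm).
Proof.
rewrite -(hsubmxK p) -(hsubmxK q) !mulJ !dot_row -sumrN.
by apply: eq_bigr => j _; rewrite !mxE; ring.
Qed.

Lemma dot_selfJ (p : 'rV[R]_(n + n)) : dotv p (p *m Jm) = 0.
Proof.
have := dotJl p p; rewrite dot_sym => H.
have : dotv p (p *m Jm) *+ 2 = 0 by rewrite mulr2n {1}H addNr.
by move/eqP; rewrite mulrn_eq0 /= => /eqP.
Qed.

Lemma enormJ (p : 'rV[R]_(n + n)) : enorm (p *m Jm) = enorm p.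
Proof. by rewrite !enorm_dot dotJJ. Qed.

Lemma re_dot (a x : cvec R n) : cinner_re a x = dotv (plus a) (plus x).
Proof. by rewrite /plus dot_row. Qed.

Lemma im_dot (a x : cvec R n) : cinner_im a x = dotv (plus a) (plus x *m Jm).
Proof.
rewrite /plus mulJ dot_row; apply: eq_bigr => j _; rewrite !mxE; ring.
Qed.

Lemma cnorm_dot (x : cvec R n) : cnorm x ^+ 2 = dotv (plus x) (plus x).
Proof.
rewrite /cnorm sqr_sqrtr; last by rewrite sumr_ge0 // => j _; rewrite addr_ge0 ?sqr_ge0.
by rewrite /plus dot_row; apply: eq_bigr => j _; rewrite !expr2.
Qed.

Lemma cnorm_enorm (x : cvec R n) : cnorm x = enorm (plus x).
Proof.
by rewrite /cnorm enorm_dot /plus dot_row; congr (Num.sqrt _).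
Qed.

Lemma plus_of_plus (y : 'rV[R]_(n + n)) : plus (of_plus y) = y.
Proof. by rewrite /plus /of_plus /= hsubmxK. Qed.

End S5.



Section S6.
Variable R : realType.
Variable N : nat.

Lemma prod4 (f g h q : 'I_N -> R) :
  (\sum_i f i) * (\sum_j g j) * (\sum_k h k) * (\sum_l q l) =
  \sum_i \sum_j \sum_k \sum_l (f i * g j * h k * q l).
Proof.
set G := \sum_j g j; set H := \sum_k h k; set Q := \sum_l q l.
rewrite -!mulrA big_distrl; apply: eq_bigr => i _ /=.
rewrite /G big_distrl mulr_sumr; apply: eq_bigr => j _ /=.
rewrite /H big_distrl !mulr_sumr; apply: eq_bigr => k _ /=.
rewrite /Q !mulr_sumr; apply: eq_bigr => l _ /=.
by rewrite !mulrA.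
Qed.

Lemma ta_rank1 m (al : 'I_m -> 'rV[R]_N) (k : R) w1 w2 w3 w4 :
  tensor_apply (fun i1 i2 i3 i4 => k * \sum_(i < m) (al i 0 i1 * al i 0 i2 * al i 0 i3 * al i 0 i4))
    w1 w2 w3 w4 =
  k * \sum_(i < m) (dotv (al i) w1 * dotv (al i) w2 * dotv (al i) w3 * dotv (al i) w4).
Proof.
rewrite /tensor_apply.
under eq_bigr => i1 _ do under eq_bigr => i2 _ do under eq_bigr => i3 _ do
  under eq_bigr => i4 _ do rewrite mulr_sumr !mulr_suml.
under eq_bigr => i1 _ do under eq_bigr => i2 _ do under eq_bigr => i3 _ do rewrite exchange_big.
under eq_bigr => i1 _ do under eq_bigr => i2 _ do rewrite exchange_big.
under eq_bigr => i1 _ do rewrite exchange_big.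
rewrite exchange_big mulr_sumr; apply: eq_bigr => i _.
rewrite /dotv prod4 mulr_sumr; apply: eq_bigr => i1 _.
rewrite mulr_sumr; apply: eq_bigr => i2 _.
rewrite mulr_sumr; apply: eq_bigr => i3 _.
rewrite mulr_sumr; apply: eq_bigr => i4 _.
ring.
Qed.

Lemma sum_ind (F : 'I_N -> R) i : \sum_j ((i == j)%:R * F j) = F i.
Proof.
rewrite (bigD1 i) //= eqxx mul1r big1 ?addr0 // => j /negPf.
by rewrite eq_sym => ->; rewrite mul0r.
Qed.

Lemma sum_ind2 (G : 'I_N -> 'I_N -> R) a b :
  \sum_i \sum_j (((a == i) && (b == j))%:R * G i j) = G a b.
Proof.
rewrite -(sum_ind (fun i => G i b) a); apply: eq_bigr => i _.
rewrite -(sum_ind (fun j => G i j) b) mulr_sumr; apply: eq_bigr => j _.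
by case: (a == i); case: (b == j) => /=; ring.
Qed.

Definition tadd (A B : tensor4 R N) : tensor4 R N := fun i1 i2 i3 i4 => A i1 i2 i3 i4 + B i1 i2 i3 i4.

Lemma ta_add A B w1 w2 w3 w4 :
  tensor_apply (tadd A B) w1 w2 w3 w4 = tensor_apply A w1 w2 w3 w4 + tensor_apply B w1 w2 w3 w4.
Proof.
rewrite /tensor_apply -big_split; apply: eq_bigr => ? _;
  rewrite -big_split; apply: eq_bigr => ? _;
  rewrite -big_split; apply: eq_bigr => ? _;
  rewrite -big_split; apply: eq_bigr => ? _; rewrite /tadd /=; ring.
Qed.

Lemma ta_S w1 w2 w3 w4 :
  tensor_apply (@S_tensor R N) w1 w2 w3 w4 =
  dotv w1 w2 * dotv w3 w4 + dotv w1 w3 * dotv w2 w4 + dotv w1 w4 * dotv w2 w3.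
Proof.
have -> : tensor_apply (@S_tensor R N) w1 w2 w3 w4 =
  tensor_apply (tadd (tadd (fun i1 i2 i3 i4 => ((i1 == i2) && (i3 == i4))%:R)
                            (fun i1 i2 i3 i4 => ((i1 == i3) && (i2 == i4))%:R))
                     (fun i1 i2 i3 i4 => ((i1 == i4) && (i2 == i3))%:R)) w1 w2 w3 w4 by [].
rewrite !ta_add.
congr (_ + _ + _); rewrite /tensor_apply /dotv.
- rewrite big_distrl; apply: eq_bigr => i1 _ /=.
  rewrite -[RHS](sum_ind (fun i2 => w1 0 i1 * w2 0 i2 * (\sum_(i < N) w3 0 i * w4 0 i)) i1) /=.
  apply: eq_bigr => i2 _.
  case: (i1 == i2) => /=.
  + rewrite mul1r mulr_sumr; apply: eq_bigr => i3 _.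
    rewrite -[RHS](sum_ind (fun i4 => w1 0 i1 * w2 0 i2 * (w3 0 i3 * w4 0 i4)) i3) /=.
    by apply: eq_bigr => i4 _; case: (i3 == i4) => /=; ring.
  + rewrite [RHS]mul0r big1 // => i3 _; rewrite big1 // => i4 _ /=; ring.
- rewrite big_distrl; apply: eq_bigr => i1 _ /=.
  rewrite mulr_sumr; apply: eq_bigr => i2 _ /=.
  under eq_bigr => i3 _ do under eq_bigr => i4 _ do rewrite -!mulrA.
  rewrite (sum_ind2 (fun i3 i4 => w1 0 i1 * (w2 0 i2 * (w3 0 i3 * w4 0 i4)))).
  ring.
- rewrite big_distrl; apply: eq_bigr => i1 _ /=.
  rewrite mulr_sumr; apply: eq_bigr => i2 _ /=.
  under eq_bigr => i3 _ do under eq_bigr => i4 _ do rewrite -!mulrA andbC.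
  rewrite (sum_ind2 (fun i3 i4 => w1 0 i1 * (w2 0 i2 * (w3 0 i3 * w4 0 i4)))).
  ring.
Qed.

End S6.



Section S7.
Variable R : realType.
Variable n : nat.

Definition Ms (s : bool) : 'M[R]_(n + n) := if s then Jm R n else 1%:M.
Definition Qf (A : tensor4 R (n + n)) (zp : 'rV[R]_(n + n)) s s' :=
  Pf A (Ms s) (- (zp *m Ms s)) (Ms s) (zp *m Ms s)
       (Ms s') (- (zp *m Ms s')) (Ms s') (zp *m Ms s').
Definition FF A zp :=
  Qf A zp false false + Qf A zp false true + Qf A zp true false + Qf A zp true true.

Lemma FF_eval A zp y : FF A zp y =
  Qf A zp false false y + Qf A zp false true y + Qf A zp true false y + Qf A zp true true y.
Proof. by []. Qed.

Lemma ta_T m (a : 'I_m -> cvec R n) (c : R) w1 w2 w3 w4 :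
  tensor_apply (T_tensor a c) w1 w2 w3 w4 =
  c^-1 * \sum_(i < m) (dotv (plus (a i)) w1 * dotv (plus (a i)) w2 *
                       dotv (plus (a i)) w3 * dotv (plus (a i)) w4).
Proof. exact: (@ta_rank1 R (n + n) m (fun i => plus (a i)) c^-1). Qed.

Lemma dotJ_swap (p q : 'rV[R]_(n + n)) : dotv q (p *m Jm R n) = - dotv p (q *m Jm R n).
Proof. by rewrite -dotJl dot_sym. Qed.

Lemma f_FF m (a : 'I_m -> cvec R n) (z : cvec R n) (c : R) : c != 0 ->
  f_obj a z = FF (tscale c (T_tensor a c)) (plus z).
Proof.
move=> c0; apply/funext => y.
rewrite FF_eval /Qf /Pf /slot /= !(ta_scale c (T_tensor a c)) !ta_T !mulrA mulfV // !mul1r.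
rewrite /f_obj -!big_split; apply: eq_bigr => i _ /=.
rewrite /cinner_abs2 !re_dot !im_dot plus_of_plus !mulmx1 !dotDr !dotNr.
ring.
Qed.

Lemma g_FF (z : cvec R n) (c : R) :
  g_obj c z = FF (tscale c (@S_tensor R (n + n))) (plus z).
Proof.
apply/funext => y.
have e4 : forall x : cvec R n, cnorm x ^+ 4 = (cnorm x ^+ 2) ^+ 2 by move=> x; rewrite -exprM.
rewrite /g_obj !e4 !cnorm_dot /cinner_abs2 re_dot im_dot plus_of_plus.
rewrite FF_eval /Qf /Pf /slot /= !ta_scale !ta_S !mulmx1.
rewrite !dotDr !dotNr !dotDl !dotNl !dotJJ !dotJl !dot_selfJ.
rewrite (dotJ_swap y (plus z)) (dot_sym (plus z) y).
ring.
Qed.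

End S7.



Section S8.
Variable R : realType.
Variable n : nat.
Local Notation N := (n + n).

Lemma good_Qf (A : tensor4 R N) zp s s' : good (Qf A zp s s').
Proof. exact: good_Pf. Qed.

Lemma hq_FF (A : tensor4 R N) zp y u :
  hess_quad (FF A zp) y u =
  hess_quad (Qf A zp false false) y u + hess_quad (Qf A zp false true) y u
  + hess_quad (Qf A zp true false) y u + hess_quad (Qf A zp true true) y u.
Proof.
rewrite /FF hess_quadD; last exact: good_Qf.
  2: by apply: goodD; [apply: goodD|]; exact: good_Qf.
rewrite hess_quadD; last exact: good_Qf.
  2: by apply: goodD; exact: good_Qf.
by rewrite hess_quadD; [|exact: good_Qf|exact: good_Qf].
Qed.

Lemma hq_diff (T S : tensor4 R N) (c : R) zp s s' y u :
  hess_quad (Qf (tscale c T) zp s s') y u - hess_quad (Qf (tscale c S) zp s s') y u =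
  c * hess_quad (Qf (tensor_sub T S) zp s s') y u.
Proof.
rewrite /Qf !hess_quad_Pf !ta_scale !ta_sub; ring.
Qed.

Lemma prodb (x y K : R) : 0 <= x -> 0 <= y -> x ^+ 2 <= K -> y ^+ 2 <= K -> x * y <= K.
Proof. move=> hx hy h1 h2; nra. Qed.

Lemma tb (E : tensor4 R N) (dl : R) p1 p2 p3 p4 (B : R) :
  tensor_opnorm E <= dl -> 0 <= dl ->
  enorm p1 * enorm p2 * enorm p3 * enorm p4 <= B ->
  `|tensor_apply E p1 p2 p3 p4| <= dl * B.
Proof.
move=> hop hdl hB.
have P0 : 0 <= enorm p1 * enorm p2 * enorm p3 * enorm p4 by rewrite !mulr_ge0 ?enorm_ge0.
apply: (le_trans (ta_bound _ _ _ _ _)).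
apply: (@le_trans _ _ (dl * (enorm p1 * enorm p2 * enorm p3 * enorm p4))).
  exact: ler_wpM2r.
exact: ler_wpM2l.
Qed.

Lemma six_bound (E : tensor4 R N) (dl eu K : R) d1 d2 d3 d4 s1 s2 s3 s4 :
  tensor_opnorm E <= dl -> 0 <= dl ->
  enorm d1 = eu -> enorm d2 = eu -> enorm d3 = eu -> enorm d4 = eu ->
  enorm s1 ^+ 2 <= K -> enorm s2 ^+ 2 <= K -> enorm s3 ^+ 2 <= K -> enorm s4 ^+ 2 <= K ->
  `|2 * (tensor_apply E d1 d2 s3 s4 + tensor_apply E d1 s2 d3 s4 + tensor_apply E d1 s2 s3 d4
        + tensor_apply E s1 d2 d3 s4 + tensor_apply E s1 d2 s3 d4 + tensor_apply E s1 s2 d3 d4)|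
  <= 12 * (dl * (eu ^+ 2 * K)).
Proof.
move=> hop hdl e1 e2 e3 e4 k1 k2 k3 k4.
have arr : forall (P x y : R), P = eu ^+ 2 * (x * y) -> 0 <= x -> 0 <= y ->
    x ^+ 2 <= K -> y ^+ 2 <= K -> P <= eu ^+ 2 * K.
  move=> P x y -> hx hy hx2 hy2; apply: ler_wpM2l; first exact: sqr_ge0.
  exact: prodb.
have T1 : `|tensor_apply E d1 d2 s3 s4| <= dl * (eu ^+ 2 * K).
  apply: tb => //; apply: (arr _ (enorm s3) (enorm s4)); rewrite ?enorm_ge0 //.
  by rewrite e1 e2; ring.
have T2 : `|tensor_apply E d1 s2 d3 s4| <= dl * (eu ^+ 2 * K).
  apply: tb => //; apply: (arr _ (enorm s2) (enorm s4)); rewrite ?enorm_ge0 //.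
  by rewrite e1 e3; ring.
have T3 : `|tensor_apply E d1 s2 s3 d4| <= dl * (eu ^+ 2 * K).
  apply: tb => //; apply: (arr _ (enorm s2) (enorm s3)); rewrite ?enorm_ge0 //.
  by rewrite e1 e4; ring.
have T4 : `|tensor_apply E s1 d2 d3 s4| <= dl * (eu ^+ 2 * K).
  apply: tb => //; apply: (arr _ (enorm s1) (enorm s4)); rewrite ?enorm_ge0 //.
  by rewrite e2 e3; ring.
have T5 : `|tensor_apply E s1 d2 s3 d4| <= dl * (eu ^+ 2 * K).
  apply: tb => //; apply: (arr _ (enorm s1) (enorm s3)); rewrite ?enorm_ge0 //.
  by rewrite e2 e4; ring.
have T6 : `|tensor_apply E s1 s2 d3 d4| <= dl * (eu ^+ 2 * K).
  apply: tb => //; apply: (arr _ (enorm s1) (enorm s2)); rewrite ?enorm_ge0 //.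
  by rewrite e3 e4; ring.
move: T1 T2 T3 T4 T5 T6.
set B := dl * (eu ^+ 2 * K).
rewrite !ler_norml => /andP[a1 b1] /andP[a2 b2] /andP[a3 b3] /andP[a4 b4] /andP[a5 b5] /andP[a6 b6].
apply/andP; split; lra.
Qed.

Lemma enormM (p : 'rV[R]_N) (s : bool) : enorm (p *m Ms R n s) = enorm p.
Proof. by case: s; rewrite /Ms ?enormJ ?mulmx1. Qed.

Lemma es_bound (y zp : 'rV[R]_N) :
  enorm (y - zp) ^+ 2 <= 2 * (enorm y + enorm zp) ^+ 2 /\
  enorm (y + zp) ^+ 2 <= 2 * (enorm y + enorm zp) ^+ 2.
Proof.
have h1 := dot_ge0 (y + zp); have h2 := dot_ge0 (y - zp).
have ey := enorm_ge0 y; have ez := enorm_ge0 zp.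
have sy := enorm_sq_dot y; have sz := enorm_sq_dot zp.
rewrite !enorm_sq_dot.
move: h1 h2; rewrite !dotDr !dotNr !dotDl !dotNl (dot_sym zp y) -sy -sz => h1 h2.
split; nra.
Qed.

Lemma hq_Q_bound (E : tensor4 R N) zp (dl : R) s s' y u :
  tensor_opnorm E <= dl -> 0 <= dl ->
  `|hess_quad (Qf E zp s s') y u| <=
  12 * (dl * (enorm u ^+ 2 * (2 * (enorm y + enorm zp) ^+ 2))).
Proof.
move=> hop hdl; rewrite /Qf hess_quad_Pf /slot.
have [bm bp] := es_bound y zp.
apply: six_bound => //; rewrite ?enormM //.
- by rewrite -mulNmx -mulmxDl enormM.
- by rewrite -mulmxDl enormM.
- by rewrite -mulNmx -mulmxDl enormM.
- by rewrite -mulmxDl enormM.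
Qed.

End S8.

End PR.
Import PR.

Lemma alg4 (R : realType) (c e1 e2 e3 e4 s1 s2 s3 s4 : R) :
  c * e1 + s1 + (c * e2 + s2) + (c * e3 + s3) + (c * e4 + s4) - (s1 + s2 + s3 + s4)
  = c * (e1 + e2 + e3 + e4).
Proof. ring. Qed.

Theorem proposition4 (R : realType) :
  exists C2 : R, 0 < C2 /\
  forall (n m : nat) (a : 'I_m -> cvec R n) (xnat : cvec R n) (sigma delta0 : R),
    (0 < n)%N -> (0 < m)%N -> xnat <> (0, 0) -> 0 < sigma -> 0 < delta0 ->
    let c := m%:R * sigma ^+ 4 in
    tensor_opnorm (tensor_sub (T_tensor a c) (@S_tensor R (n + n))) < delta0 ->
    forall (v u : 'rV[R]_(n + n)), u != 0 ->
      `| hess_quad (f_obj a xnat) v u - hess_quad (g_obj c xnat) v u |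
        < C2 * delta0 * c * enorm u ^+ 2 * (cnorm (of_plus v) + cnorm xnat) ^+ 2.
Proof.
exists 97; split; first by rewrite ltr0n.
move=> n m a xnat sigma delta0 hn hm hx hs hd c hop v u hu.
have c0 : 0 < c by rewrite /c mulr_gt0 ?ltr0n ?exprn_gt0.
rewrite (f_FF a xnat (lt0r_neq0 c0)) (g_FF xnat c) !hq_FF.
set zp := plus xnat.
set E := tensor_sub (T_tensor a c) (@S_tensor R (n + n)).
have D : forall s s', hess_quad (Qf (tscale c (T_tensor a c)) zp s s') v u =
    c * hess_quad (Qf E zp s s') v u + hess_quad (Qf (tscale c (@S_tensor R (n + n))) zp s s') v u.
  by move=> s s'; rewrite -hq_diff subrK.
rewrite !D alg4 normrM (gtr0_norm c0).
set eu := enorm u.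
have ez : cnorm xnat = enorm zp by rewrite cnorm_enorm.
have ey : cnorm (of_plus v) = enorm v by rewrite cnorm_enorm plus_of_plus.
rewrite ey ez.
set K := 2 * (enorm v + enorm zp) ^+ 2.
have hop' : tensor_opnorm E <= delta0 by exact: ltW.
have hd' : 0 <= delta0 by exact: ltW.
have b1 := hq_Q_bound zp false false v u hop' hd'.
have b2 := hq_Q_bound zp false true v u hop' hd'.
have b3 := hq_Q_bound zp true false v u hop' hd'.
have b4 := hq_Q_bound zp true true v u hop' hd'.
rewrite -/eu in b1 b2 b3 b4.
set X := _ + _ + _ + _.
have hX : `|X| <= 48 * (delta0 * (eu ^+ 2 * 2 * (enorm v + enorm zp) ^+ 2)).
  rewrite /X; apply: (le_trans (ler_normD _ _)).
  apply: (le_trans (lerD (ler_normD _ _) (lexx _))).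
  apply: (le_trans (lerD (lerD (ler_normD _ _) (lexx _)) (lexx _))).
  move: b1 b2 b3 b4; set B := 12 * _ => b1 b2 b3 b4.
  have -> : 48 * (delta0 * (eu ^+ 2 * 2 * (enorm v + enorm zp) ^+ 2)) = 4 * B by rewrite /B; ring.
  rewrite (_ : 4 * B = B + B + B + B); last by ring.
  exact: (lerD (lerD (lerD b1 b2) b3) b4).
have eu0 : 0 < eu.
  rewrite lt_neqAle enorm_ge0 andbT eq_sym; apply/eqP => /enorm_eq0 H.
  by rewrite H eqxx in hu.
have ez0 : 0 < enorm zp.
  rewrite lt_neqAle enorm_ge0 andbT eq_sym; apply/eqP => /enorm_eq0 H.
  apply: hx; move: H; rewrite /zp /plus -row_mx0 => /eq_row_mx [h1 h2].
  by rewrite [xnat]surjective_pairing h1 h2.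
have ey0 := enorm_ge0 v.
have P0 : 0 < delta0 * (eu ^+ 2 * (enorm v + enorm zp) ^+ 2).
  by rewrite mulr_gt0 // mulr_gt0 // exprn_gt0 // ltr_pwDr.
have cX := ler_wpM2l (ltW c0) hX.
have W0 : 0 < c * (delta0 * (eu ^+ 2 * (enorm v + enorm zp) ^+ 2)) by rewrite mulr_gt0.
have e1 : c * (48 * (delta0 * (eu ^+ 2 * 2 * (enorm v + enorm zp) ^+ 2))) =
  96 * (c * (delta0 * (eu ^+ 2 * (enorm v + enorm zp) ^+ 2))) by ring.
have e2 : 97 * delta0 * c * eu ^+ 2 * (enorm v + enorm zp) ^+ 2 =
  97 * (c * (delta0 * (eu ^+ 2 * (enorm v + enorm zp) ^+ 2))) by ring.
rewrite e2; rewrite e1 in cX.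
apply: (le_lt_trans cX).
by rewrite ltr_pM2r // ltr_nat.
Qed.
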